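(* For every integer $k\ge 0$, $$\varphi(2k):=\int_0^1t^{2k}\sqrt{1+t^2}\,\mathrm{d}t=\frac{(-1)^k}{4^k} \frac{\binom{2k}{k}}{k+1}\left(I(0)+\sqrt{2}\sum_{p=1}^k\frac{(-1)^p4^p}{\binom{2p}{p}}\right),$$ where $I(0)=\frac{\sqrt{2}}{2}+\frac{\ln(1+\sqrt{2})}{2}$. *)

(* Defs.v *)
From Stdlib Require Import Reals.
From Coquelicot Require Import Coquelicot.
Open Scope R_scope.

Definition phi (n : nat) : R := RInt (fun t => t ^ n * sqrt (1 + t ^ 2)) 0 1.

Definition I0 : R := sqrt 2 / 2 + ln (1 + sqrt 2) / 2.

(* Main.v *)
Require Import Defs.
From Stdlib Require Import Reals Lra Lia.
From Coquelicot Require Import Coquelicot.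
Open Scope R_scope.

Definition g (n : nat) (t : R) := t ^ n * sqrt (1 + t ^ 2).

Lemma g_cont n x : continuous (g n) x.
Proof. apply (ex_derive_continuous (V:=R_NormedModule) (g n)). unfold g. auto_derive. nra. Qed.

Lemma phi_is n : is_RInt (g n) 0 1 (phi n).
Proof.
  apply (RInt_correct (g n)). apply ex_RInt_continuous. intros; apply g_cont.
Qed.

Lemma phi_rec n : INR (S n) * (phi n + phi (S (S n))) + 3 * phi (S (S n)) = 2 * sqrt 2.
Proof.
  set (F := fun t => t ^ (S n) * ((1 + t^2) * sqrt (1 + t ^ 2))).
  set (f := fun t => INR (S n) * (g n t + g (S (S n)) t) + 3 * g (S (S n)) t).
  assert (H1 : is_RInt f 0 1 (minus (F 1) (F 0))).
  { apply (is_RInt_derive (V:=R_CompleteNormedModule) F f).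
    - intros x _. unfold F, f, g. auto_derive. nra.
      set (s := sqrt (1 + x * (x * 1))).
      assert (Hs : s * s = 1 + x * (x*1)) by (apply sqrt_sqrt; nra).
      assert (Hs0 : 0 < s) by (apply sqrt_lt_R0; nra).
      replace (match n with | 0%nat => 1 | S _ => INR n + 1 end) with (INR (S n)) by reflexivity.
      rewrite S_INR. simpl.
      replace (1 + x * (x * 1)) with (s * s) by exact Hs.
      rewrite sqrt_square by lra. match goal with |- ?a = ?b => change (@eq R a b) end. replace (s * s * (1 * ((1 + 1) * (x * 1)) * / (2 * s))) with (x * s) by (field; lra). rewrite !Hs. ring.
    - intros x _. unfold f.
      apply (continuous_plus (fun t => INR (S n) * (g n t + g (S (S n)) t)) (fun t => 3 * g (S (S n)) t)).
      + apply (continuous_scal_r (INR (S n)) (fun t => g n t + g (S (S n)) t)).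
        apply (continuous_plus (g n) (g (S (S n)))); apply g_cont.
      + apply (continuous_scal_r 3 (g (S (S n)))). apply g_cont. }
  assert (H2 : is_RInt f 0 1 (INR (S n) * (phi n + phi (S (S n))) + 3 * phi (S (S n)))).
  { apply (is_RInt_plus (fun t => INR (S n) * (g n t + g (S (S n)) t)) (fun t => 3 * g (S (S n)) t)).
    - apply (is_RInt_scal (fun t => g n t + g (S (S n)) t)).
      apply (is_RInt_plus (g n) (g (S (S n)))); apply phi_is.
    - apply (is_RInt_scal (g (S (S n)))). apply phi_is. }
  rewrite <- (is_RInt_unique _ _ _ _ H2), (is_RInt_unique _ _ _ _ H1).
  unfold minus, plus, opp, F; simpl.
  rewrite pow1. replace (1 + 1 * (1 * 1)) with 2 by ring. ring.
Qed.

Lemma phi0 : phi 0 = I0.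
Proof.
  set (F := fun t => (t * sqrt (1 + t ^ 2) + ln (t + sqrt (1+t^2)))/2).
  assert (H1 : is_RInt (g 0) 0 1 (minus (F 1) (F 0))).
  { apply (is_RInt_derive (V:=R_CompleteNormedModule) F (g 0)).
    - intros x _. unfold F, g. auto_derive.
      + assert (0 < sqrt (1 + x * (x * 1))) by (apply sqrt_lt_R0; nra).
        assert (Hs : sqrt (1 + x * (x * 1)) * sqrt (1 + x * (x * 1)) = 1 + x * (x * 1)) by (apply sqrt_sqrt; nra).
        split. nra. split. nra. split; [|exact I].
        destruct (Rle_or_lt 0 x). lra. nra.
      + set (s := sqrt (1 + x * (x * 1))).
        assert (Hs : s * s = 1 + x * (x*1)) by (apply sqrt_sqrt; nra).
        assert (Hs0 : 0 < s) by (apply sqrt_lt_R0; nra).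
        assert (Hxs : 0 < x + s) by (destruct (Rle_or_lt 0 x); nra).
        change (1 + x ^ 2) with (1 + x * (x * 1)). fold s.
        apply Rmult_eq_reg_r with (2 * s * (x + s)); [| nra].
        field_simplify; try lra.
        replace (s^3) with (s*(s*s)) by ring. replace (s^2) with (s*s) by ring.
        rewrite Hs. ring.
    - intros x _. apply g_cont. }
  rewrite <- (is_RInt_unique _ _ _ _ (phi_is 0)), (is_RInt_unique _ _ _ _ H1).
  unfold minus, plus, opp, F, I0; simpl.
  replace (1 + 1 * (1 * 1)) with 2 by ring. replace (1 + 0 * (0 * 1)) with 1 by ring.
  rewrite sqrt_1, Rplus_0_l, ln_1. field.
Qed.

Lemma Cstep k : Binomial.C (2 * S k) (S k) = Binomial.C (2 * k) k * (2 * (2 * INR k + 1) / (INR k + 1)).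
Proof.
  unfold Binomial.C.
  replace (2 * S k)%nat with (S (S (2 * k))) by lia.
  replace (S (S (2 * k)) - S k)%nat with (S k) by lia.
  replace (2 * k - k)%nat with k by lia.
  rewrite !fact_simpl, !mult_INR, !S_INR, mult_INR.
  pose proof (INR_fact_neq_0 k). pose proof (INR_fact_neq_0 (2*k)). pose proof (pos_INR k).
  simpl (INR 2). field. repeat split; try lra.
Qed.

Lemma m1pow k : (-1) ^ k = 1 \/ (-1) ^ k = -1.
Proof. induction k; simpl; [left; ring|]. destruct IHk as [-> | ->]; [right|left]; ring. Qed.

Lemma Cpos k : 0 < Binomial.C (2 * k) k.
Proof.
  unfold Binomial.C. apply Rdiv_lt_0_compat. apply INR_fact_lt_0.
  apply Rmult_lt_0_compat; apply INR_fact_lt_0.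
Qed.

Theorem theorem3p0p3 (k : nat) :
  phi (2 * k) =
  (-1) ^ k / 4 ^ k * (Binomial.C (2 * k) k / INR (k + 1)) *
  (I0 + sqrt 2 * sum_n_m (fun p => (-1) ^ p * 4 ^ p / Binomial.C (2 * p) p) 1 k).
Proof.
  induction k.
  - simpl. rewrite sum_n_m_zero by lia. rewrite phi0. unfold Binomial.C. simpl. unfold zero; simpl. field.
  - assert (HS : sum_n_m (fun p => (-1) ^ p * 4 ^ p / Binomial.C (2 * p) p) 1 (S k) =
      sum_n_m (fun p => (-1) ^ p * 4 ^ p / Binomial.C (2 * p) p) 1 k + (-1) ^ (S k) * 4 ^ (S k) / Binomial.C (2 * S k) (S k))
      by (apply (sum_n_Sm (G:=R_AbelianMonoid)); lia).
    rewrite HS; clear HS.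
    pose proof (phi_rec (2 * k)) as R.
    replace (S (S (2 * k))) with (2 * S k)%nat in R by lia.
    set (S0 := sum_n_m (fun p => (-1) ^ p * 4 ^ p / Binomial.C (2 * p) p) 1 k) in *.
    rewrite Cstep. pose proof (Cpos k). pose proof (pos_INR k).
    set (c := Binomial.C (2 * k) k) in *.
    rewrite S_INR, mult_INR in R. rewrite !plus_INR in *. rewrite S_INR in *. simpl (INR 1) in *. simpl (INR 2) in *.
    assert (E : phi (2 * S k) = (2 * sqrt 2 - (2 * INR k + 1) * phi (2 * k)) / (2 * INR k + 4)).
    { apply Rmult_eq_reg_r with (2 * INR k + 4); [|lra]. field_simplify; lra. }
    rewrite E, IHk. simpl pow.
    pose proof (pow_lt 4 k ltac:(lra)).
    destruct (m1pow k) as [Hm | Hm]; rewrite Hm; simpl (INR 0); field; lra.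
Qed.
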